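(* Let $r\ge5$ and let $C$ be a graph on $r+1$ vertices that has no vertex cover of size $1$. Let $c_3$ be the number of $3$-element vertex subsets of $C$ that are vertex covers. If \[ 4r-16+\frac{36}{r+2}\le c_3<4r-8, \] then $C$ is the disjoint union of a $K_3$ with isolated vertices, or the disjoint union of a $P_4$ (path on $4$ vertices) with isolated vertices.
   Context: A vertex cover of a graph is a set of vertices meeting every edge. *)

(* Defs.v *)
From HB Require Import structures.
From mathcomp Require Import all_boot all_order all_algebra.
Set Implicit Arguments. Unset Strict Implicit. Unset Printing Implicit Defensive.

Definition simple_graph (T : finType) (e : rel T) : Prop :=
  symmetric e /\ irreflexive e.

Definition vertex_cover (T : finType) (e : rel T) (S : {set T}) : bool :=
  [forall x, forall y, e x y ==> (x \in S) || (y \in S)].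

Definition num_covers (T : finType) (e : rel T) (k : nat) : nat :=
  #|[set S : {set T} | (#|S| == k) && vertex_cover e S]|.

Definition K3_plus_isolated (T : finType) (e : rel T) : Prop :=
  exists a b c : T, [/\ a != b, b != c & a != c] /\
    forall x y, e x y <->
      [\/ (x == a) && (y == b) || (x == b) && (y == a),
          (x == b) && (y == c) || (x == c) && (y == b)
        | (x == a) && (y == c) || (x == c) && (y == a)].

Definition P4_plus_isolated (T : finType) (e : rel T) : Prop :=
  exists a b c d : T, uniq [:: a; b; c; d] /\
    forall x y, e x y <->
      [\/ (x == a) && (y == b) || (x == b) && (y == a),
          (x == b) && (y == c) || (x == c) && (y == b)
        | (x == c) && (y == d) || (x == d) && (y == c)].

(* Main.v *)
Require Import Defs.
From HB Require Import structures.
From mathcomp Require Import all_boot all_order all_algebra.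
From mathcomp Require Import zify ring lra.
Import Order.TTheory GRing.Theory Num.Theory.


Lemma coverP (T : finType) (e : rel T) (S : {set T}) :
  reflect (forall x y, e x y -> (x \in S) || (y \in S)) (vertex_cover e S).
Proof.
apply: (iffP forallP) => [H x y exy|H x].
  by move/forallP: (H x) => /(_ y); rewrite exy.
by apply/forallP => y; apply/implyP; exact: H.
Qed.

Lemma cover_sub (T : finType) (e : rel T) (S S' : {set T}) :
  S \subset S' -> vertex_cover e S -> vertex_cover e S'.
Proof.
move=> sub /coverP H; apply/coverP => x y /H /orP [h|h];
  by rewrite (subsetP sub _ h) ?orbT.
Qed.

Lemma ub2 (T : finType) (F : {set {set T}}) (X Y : {set T}) : #|X| = 2 ->
  (forall S, S \in F -> [/\ #|S| = 3, X \subset S & forall w, w \in S -> w \in Y -> w \in X]) ->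
  #|F| <= #|~: Y|.
Proof.
move=> hX H; apply: leq_trans (leq_imset_card (fun w => w |: X) (~: Y)).
apply: subset_leq_card; apply/subsetP => S /H [h3 hXS hY].
have : 0 < #|S :\: X| by rewrite cardsD (setIidPr hXS) h3 hX.
case/card_gt0P => w; rewrite inE => /andP [wX wS].
apply/imsetP; exists w.
  by rewrite inE; apply/negP => wY; rewrite (hY w wS wY) in wX.
apply/eqP; rewrite eq_sym eqEcard; apply/andP; split.
  by rewrite subUset sub1set wS hXS.
by rewrite cardsU1 wX hX h3.
Qed.

Lemma ub1 (T : finType) (F : {set {set T}}) (Z : {set T}) : #|Z| = 3 ->
  (forall S, S \in F -> #|S| = 3 /\ Z \subset S) -> #|F| <= 1.
Proof.
move=> hZ H; rewrite -(cards1 Z); apply: subset_leq_card.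
by apply/subsetP => S /H [h3 hZS]; rewrite inE eq_sym eqEcard hZS h3 hZ leqnn.
Qed.

Lemma lb (T : finType) (F : {set {set T}}) (X Y : {set T}) : X \subset Y ->
  (forall w, w \notin Y -> w |: X \in F) -> #|~: Y| <= #|F|.
Proof.
move=> XY H; rewrite -(card_in_imset (f := fun w => w |: X)).
  apply: subset_leq_card; apply/subsetP => S /imsetP [w]; rewrite inE => wY ->.
  exact: H.
move=> w1 w2; rewrite !inE => h1 h2 E.
have : w1 \in w2 |: X by rewrite -E setU11.
rewrite in_setU1 => /orP [/eqP //|w1X].
by rewrite (subsetP XY _ w1X) in h1.
Qed.

Lemma card3 (T : finType) (a b c : T) : a != b -> a != c -> b != c -> #|a |: (b |: [set c])| = 3.
Proof. by move=> ab ac bc; rewrite !cardsU1 cards1 !inE negb_or ab ac bc. Qed.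

Lemma card4 (T : finType) (a b c d : T) : a != b -> a != c -> a != d -> b != c -> b != d -> c != d ->
  #|a |: (b |: (c |: [set d]))| = 4.
Proof. by move=> ab ac ad bc bd cd; rewrite !cardsU1 cards1 !inE !negb_or ab ac ad bc bd cd. Qed.

Lemma cardsCm (T : finType) (Y : {set T}) : #|~: Y| = #|T| - #|Y|.
Proof. by rewrite -(cardsC Y) addKn. Qed.

Set Implicit Arguments. Unset Strict Implicit.

Lemma pick_edge (T : finType) (e : rel T) (x0 : T) (X : {set T}) (S : {set T}) :
  ~~ vertex_cover e X -> vertex_cover e S ->
  let p := odflt (x0, x0) [pick p : T * T | e p.1 p.2 && (p.1 \notin X) && (p.2 \notin X)] in
  exists b : bool, ((if b then p.1 else p.2) \in S) && ((if b then p.1 else p.2) \notin X).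
Proof.
move=> nX /coverP cS /=.
case: pickP => [[x y] /= /andP [/andP [exy xX] yX]|none].
  by case/orP: (cS x y exy) => h; [exists true | exists false]; rewrite /= h.
exfalso; move/coverP: nX; apply => x y exy.
by move: (none (x, y)); rewrite /= exy /= => /negbT; rewrite negb_and !negbK orbC.
Qed.

Lemma no2 (T : finType) (e : rel T) (x0 : T) :
  (forall S : {set T}, #|S| <= 2 -> ~~ vertex_cover e S) ->
  num_covers e 3 <= 8.
Proof.
move=> H.
pose pk (X : {set T}) :=
  odflt (x0, x0) [pick p : T * T | e p.1 p.2 && (p.1 \notin X) && (p.2 \notin X)].
pose en (X : {set T}) (b : bool) := if b then (pk X).1 else (pk X).2.
pose F (t : bool * bool * bool) :=
  let z1 := en set0 t.1.1 in let z2 := en [set z1] t.1.2 in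
  let z3 := en (z1 |: [set z2]) t.2 in z1 |: (z2 |: [set z3]).
rewrite /num_covers.
apply: (@leq_trans #|[set F t | t in [set: bool * bool * bool]]|); last first.
  by apply: leq_trans (leq_imset_card _ _) _; rewrite cardsT !card_prod !card_bool.
apply: subset_leq_card; apply/subsetP => S; rewrite inE => /andP [/eqP h3 cS].
have c0 : #|@set0 T| <= 2 by rewrite cards0.
have [b1 /andP [h1 _]] := pick_edge x0 (H set0 c0) cS.
set z1 := (if b1 then _ else _) in h1.
have c1 : #|[set z1]| <= 2 by rewrite cards1.
have [b2 /andP [h2 n2]] := pick_edge x0 (H [set z1] c1) cS.
set z2 := (if b2 then _ else _) in h2 n2.
have c2 : #|z1 |: [set z2]| <= 2 by rewrite cardsU1 cards1; case: (_ \notin _).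
have [b3 /andP [h3' n3]] := pick_edge x0 (H _ c2) cS.
set z3 := (if b3 then _ else _) in h3' n3.
apply/imsetP; exists (b1, b2, b3); first by rewrite inE.
apply/eqP; rewrite eq_sym eqEcard; apply/andP; split.
  by rewrite /F /en /pk /= -/z1 -/z2 -/z3 !subUset !sub1set h1 h2 h3'.
rewrite /F /en /pk /= -/z1 -/z2 -/z3 h3.
rewrite !inE in n2 n3.
rewrite !cardsU1 cards1 !inE.
move: n2 n3; rewrite negb_or eq_sym => n2 /andP [n31 n32].
by rewrite negb_or n2 (eq_sym z1 z3) n31 (eq_sym z2 z3) n32.
Qed.

Definition Cv (T : finType) (e : rel T) := [set S : {set T} | (#|S| == 3) && vertex_cover e S].
Definition P11 (T : finType) (e : rel T) (u v : T) := [set S in Cv e | (u \in S) && (v \in S)].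
Definition P10 (T : finType) (e : rel T) (u v : T) := [set S in Cv e | (u \in S) && (v \notin S)].
Definition P00 (T : finType) (e : rel T) (u v : T) := [set S in Cv e | (u \notin S) && (v \notin S)].

Lemma split4 (T : finType) (e : rel T) (u v : T) :
  num_covers e 3 = #|P11 e u v| + #|P10 e u v| + #|P10 e v u| + #|P00 e u v|.
Proof.
rewrite /num_covers -/(Cv e) -(cardsID [set S : {set T} | u \in S] (Cv e)).
rewrite -(cardsID [set S : {set T} | v \in S] (Cv e :&: _)).
rewrite -(cardsID [set S : {set T} | v \in S] (Cv e :\: _)) !addnA.
congr (_ + _ + _ + _); apply: eq_card => S; rewrite /P11 /P10 /P00 !inE;
  by case: (u \in S); case: (v \in S); rewrite /= ?andbT ?andbF.
Qed.

Lemma cover_nb (T : finType) (e : rel T) (u v : T) (S : {set T}) :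
  symmetric e -> vertex_cover e [set u; v] ->
  (u \in S \/ forall y, e u y -> y \in S) ->
  (v \in S \/ forall y, e v y -> y \in S) -> vertex_cover e S.
Proof.
move=> sym /coverP cov hu hv; apply/coverP => x y exy.
have eyx : e y x by rewrite sym.
move: (cov x y exy); rewrite !inE => /orP [/orP [] | /orP []] /eqP E.
- move: exy eyx; rewrite E => exy eyx.
  by case: hu => [->|h] //; rewrite (h _ exy) orbT.
- move: exy eyx; rewrite E => exy eyx.
  by case: hv => [->|h] //; rewrite (h _ exy) orbT.
- move: exy eyx; rewrite E => exy eyx.
  by case: hu => [->|h]; rewrite ?orbT // (h _ eyx).
- move: exy eyx; rewrite E => exy eyx.
  by case: hv => [->|h]; rewrite ?orbT // (h _ eyx).
Qed.

Lemma cover_forced (T : finType) (e : rel T) (S : {set T}) v b :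
  vertex_cover e S -> v \notin S -> e v b -> b \in S.
Proof. by move=> /coverP cS nv evb; move: (cS v b evb); rewrite (negbTE nv). Qed.

Lemma nb_ne (T : finType) (e : rel T) (u v x : T) : symmetric e -> irreflexive e ->
  ~~ e u v -> e u x || e v x -> (x != u) && (x != v).
Proof.
move=> sym irr nuv /orP [] h; apply/andP; split; apply/eqP => E; move: h; rewrite E ?irr //.
- by move=> h; rewrite h in nuv.
- by move=> h; rewrite sym h in nuv.
Qed.


Lemma L11ub (T : finType) (e : rel T) (u v : T) (sym : symmetric e) (irr : irreflexive e) (uv : u != v) (cov : vertex_cover e [set u; v]) : #|P11 e u v| <= #|T| - 2.
Proof.
have := @ub2 _ (P11 e u v) [set u; v] [set u; v].
rewrite cardsCm. set X := [set u; v]. have cX : #|X| = 2 by rewrite /X cards2 uv.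
rewrite cX; apply=> //.
move=> S; rewrite !inE => /andP [/andP [/eqP h3 _] /andP [hu hv]]; split => //.
by rewrite subUset !sub1set hu hv.
Qed.

Lemma L11lb (T : finType) (e : rel T) (u v : T) (sym : symmetric e) (irr : irreflexive e) (uv : u != v) (cov : vertex_cover e [set u; v]) : #|T| - 2 <= #|P11 e u v|.
Proof.
have := @lb _ (P11 e u v) [set u; v] [set u; v].
rewrite cardsCm. set X := [set u; v]. have cX : #|X| = 2 by rewrite /X cards2 uv.
rewrite cX; apply=> // w wX; rewrite !inE.
rewrite cardsU1 wX cX !eqxx !orbT /= ?andbT.
by apply: cover_sub cov; rewrite subsetUr.
Qed.

Lemma L10ub (T : finType) (e : rel T) (u v : T) (sym : symmetric e) (irr : irreflexive e) (uv : u != v) (cov : vertex_cover e [set u; v]) (b : T) : e v b -> b != u -> #|P10 e u v| <= #|T| - 3.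
Proof.
move=> evb bu.
have vb : v != b by apply/eqP => E; rewrite E irr in evb.
have := @ub2 _ (P10 e u v) (u |: [set b]) (u |: (v |: [set b])).
have ub : u != b by rewrite eq_sym.
rewrite cardsCm card3 //; apply.
  by rewrite cards2 ub.
move=> S; rewrite !inE => /andP [/andP [/eqP h3 cS] /andP [hu hv]]; split => //.
  by rewrite subUset !sub1set hu (cover_forced cS hv evb).
by move=> w wS; rewrite !inE => /orP [->//|/orP [/eqP E|->]]; rewrite ?orbT //; rewrite -E wS in hv.
Qed.

Lemma L10one (T : finType) (e : rel T) (u v : T) (sym : symmetric e) (irr : irreflexive e) (uv : u != v) (cov : vertex_cover e [set u; v]) (b1 b2 : T) : e v b1 -> e v b2 -> b1 != u -> b2 != u -> b1 != b2 ->
  #|P10 e u v| <= 1.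
Proof.
move=> e1 e2 n1 n2 n12.
have u1 : u != b1 by rewrite eq_sym.
have u2 : u != b2 by rewrite eq_sym.
apply: (@ub1 _ _ (u |: (b1 |: [set b2]))); first by rewrite card3.
move=> S; rewrite !inE => /andP [/andP [/eqP h3 cS] /andP [hu hv]]; split => //.
by rewrite !subUset !sub1set hu (cover_forced cS hv e1) (cover_forced cS hv e2).
Qed.

Lemma L10lb (T : finType) (e : rel T) (u v : T) (sym : symmetric e) (irr : irreflexive e) (uv : u != v) (cov : vertex_cover e [set u; v]) (b : T) : e v b -> b != u -> (forall y, e v y -> (y == u) || (y == b)) ->
  #|T| - 3 <= #|P10 e u v|.
Proof.
move=> evb bu hB.
have vb : v != b by apply/eqP => E; rewrite E irr in evb.
have := @lb _ (P10 e u v) (u |: [set b]) (u |: (v |: [set b])).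
have ub : u != b by rewrite eq_sym.
rewrite cardsCm card3 //; apply.
  by rewrite !subUset !sub1set !inE !eqxx !orbT.
move=> w; rewrite !inE !negb_or => /andP [wu /andP [wv wb]].
rewrite cardsU1 cards2 !inE negb_or wu wb ub /= !eqxx orbT /=.
rewrite (eq_sym v w) wv (eq_sym v u) (negbTE uv) vb /= andbT.
apply: (cover_nb sym cov); first by left; rewrite !inE eqxx orbT.
by right => y /hB; rewrite !inE => /orP [->|->]; rewrite ?orbT.
Qed.

Lemma L00ub (T : finType) (e : rel T) (u v : T) (sym : symmetric e) (irr : irreflexive e) (uv : u != v) (cov : vertex_cover e [set u; v]) (x y : T) : ~~ e u v -> e u x || e v x -> e u y || e v y -> x != y ->
  #|P00 e u v| <= #|T| - 4.
Proof.
move=> nuv hx hy xy.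
case/andP: (nb_ne sym irr nuv hx) => xu xv.
case/andP: (nb_ne sym irr nuv hy) => yu yv.
have := @ub2 _ (P00 e u v) (x |: [set y]) (u |: (v |: (x |: [set y]))).
have ux : u != x by rewrite eq_sym.
have uy : u != y by rewrite eq_sym.
have vx : v != x by rewrite eq_sym.
have vy : v != y by rewrite eq_sym.
rewrite cardsCm card4 //; apply.
  by rewrite cards2 xy.
move=> S; rewrite !inE => /andP [/andP [/eqP h3 cS] /andP [hu hv]]; split => //.
  have fx : x \in S by case/orP: hx => h; [exact: cover_forced cS hu h|exact: cover_forced cS hv h].
  have fy : y \in S by case/orP: hy => h; [exact: cover_forced cS hu h|exact: cover_forced cS hv h].
  by rewrite subUset !sub1set fx fy.
move=> w wS; rewrite !inE => /orP [/eqP E|/orP [/eqP E|->//]].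
  by rewrite -E wS in hu.
by rewrite -E wS in hv.
Qed.

Lemma L00one (T : finType) (e : rel T) (u v : T) (sym : symmetric e) (irr : irreflexive e) (uv : u != v) (cov : vertex_cover e [set u; v]) (x y z : T) : ~~ e u v -> e u x || e v x -> e u y || e v y -> e u z || e v z ->
  x != y -> x != z -> y != z -> #|P00 e u v| <= 1.
Proof.
move=> nuv hx hy hz xy xz yz.
apply: (@ub1 _ _ (x |: (y |: [set z]))); first by rewrite card3.
move=> S; rewrite !inE => /andP [/andP [/eqP h3 cS] /andP [hu hv]]; split => //.
have f : forall t, e u t || e v t -> t \in S.
  by move=> t /orP [] h; [exact: cover_forced cS hu h|exact: cover_forced cS hv h].
by rewrite !subUset !sub1set !f.
Qed.

Lemma L00zero (T : finType) (e : rel T) (u v : T) : e u v -> #|P00 e u v| = 0.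
Proof.
move=> euv; apply/eqP; rewrite cards_eq0; apply/eqP/setP => S; rewrite !inE.
apply/negP => /andP [/andP [_ cS] /andP [nu nv]].
by move: (cover_forced cS nu euv); rewrite (negbTE nv).
Qed.

Lemma L00lb (T : finType) (e : rel T) (u v : T) (sym : symmetric e) (irr : irreflexive e) (uv : u != v) (cov : vertex_cover e [set u; v]) (a b : T) : ~~ e u v -> e u a -> e v b -> a != b ->
  (forall y, e u y -> (y == v) || (y == a)) -> (forall y, e v y -> (y == u) || (y == b)) ->
  #|T| - 4 <= #|P00 e u v|.
Proof.
move=> nuv eua evb ab hA hB.
have hx : e u a || e v a by rewrite eua.
have hy : e u b || e v b by rewrite evb orbT.
case/andP: (nb_ne sym irr nuv hx) => xu xv.
case/andP: (nb_ne sym irr nuv hy) => yu yv.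
have := @lb _ (P00 e u v) (a |: [set b]) (u |: (v |: (a |: [set b]))).
have ux : u != a by rewrite eq_sym.
have uy : u != b by rewrite eq_sym.
have vx : v != a by rewrite eq_sym.
have vy : v != b by rewrite eq_sym.
rewrite cardsCm card4 //; apply.
  by rewrite !subUset !sub1set !inE !eqxx !orbT.
move=> w; rewrite !inE !negb_or => /andP [wu /andP [wv /andP [wa wb]]].
rewrite cardsU1 cards2 !inE negb_or wa wb ab /=.
rewrite (eq_sym u w) wu (eq_sym u a) xu (eq_sym u b) yu (eq_sym v w) wv (eq_sym v a) xv (eq_sym v b) yv /= andbT.
apply: (cover_nb sym cov).
  right => y0 hy0; case/orP: (hA y0 hy0) => [/eqP E|/eqP ->]; last by rewrite !inE eqxx ?orbT.
  by move: hy0; rewrite E (negbTE nuv).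
right => y0 hy0; case/orP: (hB y0 hy0) => [/eqP E|/eqP ->]; last by rewrite !inE eqxx ?orbT.
by move: hy0; rewrite E sym (negbTE nuv).
Qed.

Ltac pick3 := solve [ apply: Or31; rewrite ?eqxx /= ?orbT ?andbT //
                    | apply: Or32; rewrite ?eqxx /= ?orbT ?andbT //
                    | apply: Or33; rewrite ?eqxx /= ?orbT ?andbT // ].

Lemma uniq4 (T : eqType) (a b c d : T) : a != b -> a != c -> a != d -> b != c -> b != d -> c != d ->
  uniq [:: a; b; c; d].
Proof. by move=> ab ac ad bc bd cd; rewrite /= !inE !negb_or ab ac ad bc bd cd. Qed.

Lemma nbr (T : finType) (e : rel T) (u v : T) : symmetric e -> vertex_cover e [set u; v] ->
  ~~ vertex_cover e [set v] -> exists a, e u a && (a != v).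
Proof.
move=> sym /coverP cov nv.
case: (boolP [exists x, e u x && (x != v)]) => [/existsP //|/existsPn H].
exfalso; move/negP: nv; apply; apply/coverP => x y exy.
move: (cov x y exy); rewrite !inE => /orP [/orP [] | /orP []] /eqP E.
- by move: (H y); rewrite -E exy /= negbK => ->; rewrite orbT.
- by rewrite E eqxx.
- by move: (H x); rewrite -E sym exy /= negbK => ->.
- by rewrite E eqxx orbT.
Qed.

Lemma K3mk (T : finType) (e : rel T) (u v a : T) : symmetric e -> irreflexive e ->
  vertex_cover e [set u; v] -> e u v -> e u a -> e v a ->
  (forall y, e u y -> (y == v) || (y == a)) -> (forall y, e v y -> (y == u) || (y == a)) ->
  K3_plus_isolated e.
Proof.
move=> sym irr /coverP cov euv eua eva hA hB.
have neq : forall x y, e x y -> x != y by move=> x y exy; apply/eqP => E; rewrite E irr in exy.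
exists u, v, a; split; first by rewrite !neq.
move=> x y; split => [exy|].
  have eyx : e y x by rewrite sym.
  move: (cov x y exy); rewrite !inE => /orP [/orP [] | /orP []] /eqP Ex.
  - by rewrite Ex in exy; case/orP: (hA y exy) => /eqP Ey; rewrite Ex Ey; pick3.
  - by rewrite Ex in exy; case/orP: (hB y exy) => /eqP Ey; rewrite Ex Ey; pick3.
  - by rewrite Ex in eyx; case/orP: (hA x eyx) => /eqP Ey; rewrite Ex Ey; pick3.
  - by rewrite Ex in eyx; case/orP: (hB x eyx) => /eqP Ey; rewrite Ex Ey; pick3.
by case => /orP [] /andP [/eqP -> /eqP ->]; rewrite // sym.
Qed.

Lemma P4mk1 (T : finType) (e : rel T) (u v a b : T) : symmetric e -> irreflexive e ->
  vertex_cover e [set u; v] -> e u v -> e u a -> e v b -> a != v -> b != u -> a != b ->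
  (forall y, e u y -> (y == v) || (y == a)) -> (forall y, e v y -> (y == u) || (y == b)) ->
  P4_plus_isolated e.
Proof.
move=> sym irr /coverP cov euv eua evb av bu ab hA hB.
have neq : forall x y, e x y -> x != y by move=> x y exy; apply/eqP => E; rewrite E irr in exy.
exists a, u, v, b; split.
  have au : a != u by rewrite eq_sym neq.
  have ub : u != b by rewrite eq_sym.
  by apply: uniq4; rewrite // neq.
move=> x y; split => [exy|].
  have eyx : e y x by rewrite sym.
  move: (cov x y exy); rewrite !inE => /orP [/orP [] | /orP []] /eqP Ex.
  - by rewrite Ex in exy; case/orP: (hA y exy) => /eqP Ey; rewrite Ex Ey; pick3.
  - by rewrite Ex in exy; case/orP: (hB y exy) => /eqP Ey; rewrite Ex Ey; pick3.
  - by rewrite Ex in eyx; case/orP: (hA x eyx) => /eqP Ey; rewrite Ex Ey; pick3.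
  - by rewrite Ex in eyx; case/orP: (hB x eyx) => /eqP Ey; rewrite Ex Ey; pick3.
by case => /orP [] /andP [/eqP -> /eqP ->]; rewrite // sym.
Qed.

Lemma P4mk2 (T : finType) (e : rel T) (u v p q : T) : symmetric e -> irreflexive e ->
  u != v -> vertex_cover e [set u; v] -> ~~ e u v -> e u p -> e u q -> e v p -> p != q ->
  (forall y, e u y -> (y == p) || (y == q)) -> (forall y, e v y -> (y == u) || (y == p)) ->
  P4_plus_isolated e.
Proof.
move=> sym irr uv /coverP cov nuv eup euq evp pq hA hB.
have neq : forall x y, e x y -> x != y by move=> x y exy; apply/eqP => E; rewrite E irr in exy.
have vu : v != u by rewrite eq_sym.
have vq : v != q by apply/eqP => E; move: euq; rewrite -E (negbTE nuv).
exists v, p, u, q; split.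
  have pu : p != u by rewrite eq_sym neq.
  by apply: uniq4 => //; apply: neq.
move=> x y; split => [exy|].
  have eyx : e y x by rewrite sym.
  move: (cov x y exy); rewrite !inE => /orP [/orP [] | /orP []] /eqP Ex.
  - by rewrite Ex in exy; case/orP: (hA y exy) => /eqP Ey; rewrite Ex Ey; pick3.
  - rewrite Ex in exy; case/orP: (hB y exy) => /eqP Ey; last by rewrite Ex Ey; pick3.
    by move: exy; rewrite Ey sym (negbTE nuv).
  - by rewrite Ex in eyx; case/orP: (hA x eyx) => /eqP Ey; rewrite Ex Ey; pick3.
  - rewrite Ex in eyx; case/orP: (hB x eyx) => /eqP Ey; last by rewrite Ex Ey; pick3.
    by move: eyx; rewrite Ey sym (negbTE nuv).
by case => /orP [] /andP [/eqP -> /eqP ->]; rewrite // sym.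
Qed.

Lemma sumA n x y z w : 6 <= n -> x <= n - 2 -> y <= n - 3 -> z <= 1 -> w <= 1 -> x + y + z + w <= 2 * n - 3.
Proof. lia. Qed.
Lemma sumC n x y z w : 6 <= n -> x <= n - 2 -> y <= 1 -> z <= 1 -> w <= n - 4 -> x + y + z + w <= 2 * n - 3.
Proof. lia. Qed.
Lemma sumD n x y z w : 6 <= n -> n - 2 <= x -> n - 3 <= y -> n - 3 <= z -> n - 4 <= w -> 4 * n - 12 <= x + y + z + w.
Proof. lia. Qed.

Lemma caseAB (T : finType) (e : rel T) (u v a b a2 : T) (sym : symmetric e) (irr : irreflexive e)
  (uv : u != v) (cov : vertex_cover e [set u; v]) (n6 : 6 <= #|T|) :
  e u a -> a != v -> e v b -> b != u -> (forall y, e v y -> (y == u) || (y == b)) ->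
  e u a2 -> a2 != v -> a2 != a ->
  P4_plus_isolated e \/ num_covers e 3 <= 2 * #|T| - 3.
Proof.
move=> eua av evb bu hB eua2 a2v a2a.
have vu : v != u by rewrite eq_sym.
have cov' : vertex_cover e [set v; u] by rewrite /= setUC.
have s4 := split4 e u v.
have h11 := L11ub sym irr uv cov.
have h10 := L10ub sym irr uv cov evb bu.
have aa2 : a != a2 by rewrite eq_sym.
have h01 := L10one sym irr vu cov' eua eua2 av a2v aa2.
case: (boolP (e u v)) => [euv|nuv].
  by right; rewrite s4 (L00zero euv); apply: sumA.
have hx : forall t, e u t -> e u t || e v t by move=> t ->.
have hb : e u b || e v b by rewrite evb orbT.
case: (boolP ((b != a) && (b != a2))) => [/andP [ba ba2]|hb2].
  have ab : a != b by rewrite eq_sym.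
  have a2b : a2 != b by rewrite eq_sym.
  have := L00one sym irr uv cov nuv (hx _ eua) (hx _ eua2) hb aa2 ab a2b.
  by move=> h00; right; rewrite s4; apply: sumA.
case: (boolP [exists y, e u y && (y != a) && (y != a2)]) => [/existsP [a3 /andP [/andP [eua3 a3a] a3a2]]|/existsPn H3].
  have aa3 : a != a3 by rewrite eq_sym.
  have a2a3 : a2 != a3 by rewrite eq_sym.
  have := L00one sym irr uv cov nuv (hx _ eua) (hx _ eua2) (hx _ eua3) aa2 aa3 a2a3.
  by move=> h00; right; rewrite s4; apply: sumA.
have hA : forall y, e u y -> (y == a) || (y == a2).
  by move=> y euy; move: (H3 y); rewrite euy /= negb_and !negbK orbC.
left; move: hb2; rewrite negb_and !negbK => /orP [/eqP Eb|/eqP Eb].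
  rewrite Eb in evb hB.
  exact: (P4mk2 sym irr uv cov nuv eua eua2 evb aa2 hA hB).
rewrite Eb in evb hB.
apply: (P4mk2 sym irr uv cov nuv eua2 eua evb a2a _ hB).
by move=> y /hA; rewrite orbC.
Qed.

Lemma two_cover (T : finType) (e : rel T) (u v : T) : simple_graph e -> u != v ->
  vertex_cover e [set u; v] -> (forall S : {set T}, #|S| <= 1 -> ~~ vertex_cover e S) ->
  6 <= #|T| ->
  [\/ K3_plus_isolated e, P4_plus_isolated e, num_covers e 3 <= 2 * #|T| - 3
    | 4 * #|T| - 12 <= num_covers e 3].
Proof.
case=> sym irr uv cov H n6.
have vu : v != u by rewrite eq_sym.
have cov' : vertex_cover e [set v; u] by rewrite /= setUC.
have nu : ~~ vertex_cover e [set u] by apply: H; rewrite cards1.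
have nv : ~~ vertex_cover e [set v] by apply: H; rewrite cards1.
have [a /andP [eua av]] := nbr sym cov nv.
have [b /andP [evb bu]] := nbr sym cov' nu.
have s4 := split4 e u v.
case: (boolP [forall y, e v y ==> (y == u) || (y == b)]) => [/forallP hB'|/forallPn [b2]].
  have hB : forall y, e v y -> (y == u) || (y == b) by move=> y; apply/implyP.
  case: (boolP [forall y, e u y ==> (y == v) || (y == a)]) => [/forallP hA'|/forallPn [a2]].
    have hA : forall y, e u y -> (y == v) || (y == a) by move=> y; apply/implyP.
    case: (boolP (e u v)) => [euv|nuv].
      have eva : e v a -> K3_plus_isolated e.
        move=> eva; apply: (K3mk sym irr cov euv eua eva hA).
        by move=> y /hB /orP [->//|/eqP ->]; case/orP: (hB a eva) => [/eqP E|/eqP ->]; rewrite ?eqxx ?orbT //; rewrite E irr in eua.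
      case: (eqVneq a b) => [Eab|ab].
        by apply: Or41; apply: eva; rewrite Eab.
      by apply: Or42; apply: (P4mk1 sym irr cov euv eua evb av bu ab hA hB).
    have ab : a != b.
      have c1 : #|[set a]| <= 1 by rewrite cards1.
      apply/eqP => Eab; move/negP: (H [set a] c1); apply.
      apply: (cover_nb sym cov); right => y hy.
        case/orP: (hA y hy) => /eqP E; last by rewrite E inE.
        by move: hy; rewrite E (negbTE nuv).
      case/orP: (hB y hy) => /eqP E; last by rewrite E Eab inE.
      by move: hy; rewrite E sym (negbTE nuv).
    apply: Or44; rewrite s4; apply: sumD => //.
    - exact: L11lb sym irr uv cov.
    - by have := L10lb sym irr uv cov evb bu hB.
    - by have := L10lb sym irr vu cov' eua av hA.
    - by have := L00lb sym irr uv cov nuv eua evb ab hA hB.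
  rewrite negb_imply negb_or => /andP [eua2 /andP [a2v a2a]].
  case: (caseAB sym irr uv cov n6 eua av evb bu hB eua2 a2v a2a) => h.
    by apply: Or42.
  by apply: Or43.
rewrite negb_imply negb_or => /andP [evb2 /andP [b2u b2b]].
case: (boolP [forall y, e u y ==> (y == v) || (y == a)]) => [/forallP hA'|/forallPn [a2]].
  have hA : forall y, e u y -> (y == v) || (y == a) by move=> y; apply/implyP.
  case: (caseAB sym irr vu cov' n6 evb bu eua av hA evb2 b2u b2b) => h.
    by apply: Or42.
  by apply: Or43.
rewrite negb_imply negb_or => /andP [eua2 /andP [a2v a2a]].
have ab2 : b != b2 by rewrite eq_sym.
have aa2 : a != a2 by rewrite eq_sym.
have h10 := L10one sym irr uv cov evb evb2 bu b2u ab2.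
have h01 := L10one sym irr vu cov' eua eua2 av a2v aa2.
have h11 := L11ub sym irr uv cov.
apply: Or43; rewrite s4; apply: sumC => //.
case: (boolP (e u v)) => [euv|nuv]; first by rewrite (L00zero euv).
have hx : forall t, e u t -> e u t || e v t by move=> t ->.
by have := L00ub sym irr uv cov nuv (hx _ eua) (hx _ eua2) aa2.
Qed.

Lemma arith1 (r N : nat) : 5 <= r ->
  ((4 * r%:Q - 16) + 36 / (r + 2)%:Q <= N%:Q)%R -> (N + 1 <= 2 * r)%N -> False.
Proof.
move=> r5 h1 hN.
have E : forall n : nat, (n%:Q = n%:R :> rat)%R by [].
have hq : ((N + 1)%:R <= (2 * r)%:R :> rat)%R by rewrite ler_nat.
have r5q : ((5%:R : rat) <= r%:R)%R by rewrite ler_nat.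
rewrite natrD natrM in hq.
move: h1; rewrite ?intrD !E ?natrD.
set x := (36 / _)%R => h1.
have hpos : (0 < (r%:R + 2%:R : rat))%R by lra.
have hx : (x * (r%:R + 2%:R) = 36)%R by rewrite /x divfK // gt_eqF.
have h3 : (0 <= (r%:R - 5) * (2 * r%:R - 1) :> rat)%R by apply: mulr_ge0; lra.
nra.
Qed.

Lemma arith2 (r N : nat) :
  ((N%:Q) < 4 * r%:Q - 8)%R -> (4 * r <= N + 8)%N -> False.
Proof.
move=> h2 hN.
have E : forall n : nat, (n%:Q = n%:R :> rat)%R by [].
have hq : ((4 * r)%:R <= (N + 8)%:R :> rat)%R by rewrite ler_nat.
rewrite natrD natrM in hq.
move: h2; rewrite !E => h2.
lra.
Qed.


Theorem mainTheorem12 (r : nat) (e : rel 'I_r.+1) :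
  5 <= r ->
  simple_graph e ->
  (forall S : {set 'I_r.+1}, #|S| = 1 -> ~~ vertex_cover e S) ->
  ((4 * r%:Q - 16) + 36 / (r + 2)%:Q <= (num_covers e 3)%:Q)%R ->
  ((num_covers e 3)%:Q < 4 * r%:Q - 8)%R ->
  K3_plus_isolated e \/ P4_plus_isolated e.
Proof.
move=> r5 sg H1 h1 h2.
have H01 : forall S : {set 'I_r.+1}, #|S| <= 1 -> ~~ vertex_cover e S.
  move=> S; rewrite leq_eqVlt ltnS leqn0 => /orP [/eqP|/eqP] hS; first exact: H1.
  move/cards0_eq: hS => ->; apply/negP => c0.
  have c1 : #|[set (@ord0 r)]| = 1 by rewrite cards1.
  by move/negP: (H1 _ c1); apply; apply: cover_sub c0; rewrite sub0set.
have n6 : 6 <= #|'I_r.+1| by rewrite card_ord.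
case: (boolP [exists S : {set 'I_r.+1}, (#|S| == 2) && vertex_cover e S]).
  case/existsP => S /andP [/cards2P [u [v [uv ->]]] cov].
  case: (two_cover sg uv cov H01 n6) => [h|h|h|h].
  - by left.
  - by right.
  - exfalso; apply: (arith1 r5 h1); move: h; rewrite card_ord; lia.
  - exfalso; apply: (arith2 h2); move: h; rewrite card_ord; lia.
move/existsPn => H2.
have H012 : forall S : {set 'I_r.+1}, #|S| <= 2 -> ~~ vertex_cover e S.
  move=> S; rewrite leq_eqVlt ltnS => /orP [hS|hS]; last exact: H01.
  by move: (H2 S); rewrite hS.
have h8 := no2 ord0 H012.
exfalso; apply: (arith1 r5 h1); lia.
Qed.
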